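(* Let $\lambda$ be an infinite cardinal and $\mathcal C$ a small category with ${<}\lambda$-sequential colimits. Suppose that for each object $a$ of $\mathcal C$ we are given a set $Q_a$ with $|Q_a|\le\lambda$, each element of which is a set of morphisms that is generic above $a$. Then for every object $c$ of $\mathcal C$ there is a sequential-colimit-preserving functor $F:\lambda\to\mathcal C$ with $F(0)=c$ such that for every $\alpha<\lambda$ and every $X\in Q_{F(\alpha)}$ there is $\beta$ with $\alpha<\beta<\lambda$ and $F(\alpha\to\beta)\in X$.
   Context: An ordinal $\lambda$ is viewed as a category (a poset) with a unique morphism $\alpha\to\beta$ whenever $\alpha\le\beta$. A category $\mathcal C$ has ${<}\lambda$-sequential colimits if for every ordinal $\alpha<\lambda$ every diagram $\alpha\to\mathcal C$ has a colimit. A functor $F:\lambda\to\mathcal C$ is sequential-colimit-preserving if for every limit ordinal $\alpha<\lambda$, $F(\alpha)$ (with the morphisms $F(\beta\to\alpha)$, $\beta<\alpha$) is a colimit of the restricted diagram $F|_\alpha$. For an object $a$ of a small category $\mathcal C$, a set $X$ of morphisms with domain $a$ is generic above $a$ if for every morphism $f:a\to b$ there are an object $c$ and a morphism $g:b\to c$ with $g\circ f\in X$. *)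

(* Defs.v *)
Set Implicit Arguments.

Record Category := {
  Obj :> Type;
  Hom : Obj -> Obj -> Type;
  idm : forall a, Hom a a;
  comp : forall a b c, Hom b c -> Hom a b -> Hom a c;
  comp_id_l : forall a b (f : Hom a b), comp (idm b) f = f;
  comp_id_r : forall a b (f : Hom a b), comp f (idm a) = f;
  comp_assoc : forall a b c d (h : Hom c d) (g : Hom b c) (f : Hom a b),
      comp h (comp g f) = comp (comp h g) f
}.
Arguments Hom {C} : rename.
Arguments idm {C} : rename.
Arguments comp {C a b c} : rename.

(** A functor from a preorder (P, le), viewed as a thin category, to C.
    Morphism components take the proof of [le x y]; functoriality is stated
    for all such proofs. *)
Record PFunctor (P : Type) (le : P -> P -> Prop) (C : Category) := {
  fobj :> P -> C;
  fmor : forall x y, le x y -> Hom (fobj x) (fobj y);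
  fmor_id : forall x (p : le x x), fmor p = idm (fobj x);
  fmor_comp : forall x y z (p : le x y) (q : le y z) (r : le x z),
      fmor r = comp (fmor q) (fmor p)
}.
Arguments fobj {P le C}.
Arguments fmor {P le C} _ {x y}.

Definition is_colimit (P : Type) (le : P -> P -> Prop) (C : Category)
  (D : PFunctor le C) (v : C) (iota : forall x, Hom (D x) v) : Prop :=
  (forall x y (p : le x y), comp (iota y) (fmor D p) = iota x) /\
  (forall (w : C) (kappa : forall x, Hom (D x) w),
     (forall x y (p : le x y), comp (kappa y) (fmor D p) = kappa x) ->
     exists u : Hom v w,
       (forall x, comp u (iota x) = kappa x) /\
       (forall u' : Hom v w, (forall x, comp u' (iota x) = kappa x) -> u' = u)).

(** An ordinal lambda is represented by a type T with a strict well-order lt;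
    an ordinal alpha < lambda is an element a : T, identified with the
    initial segment {x | lt x a}. *)
Definition is_well_order (T : Type) (lt : T -> T -> Prop) : Prop :=
  well_founded lt /\
  (forall x y z, lt x y -> lt y z -> lt x z) /\
  (forall x y, lt x y \/ x = y \/ lt y x) /\
  (forall x, ~ lt x x).

Definition ole (T : Type) (lt : T -> T -> Prop) (x y : T) : Prop :=
  lt x y \/ x = y.

Definition seg (T : Type) (lt : T -> T -> Prop) (a : T) : Type :=
  { x : T | lt x a }.
Definition seg_le (T : Type) (lt : T -> T -> Prop) (a : T)
  (x y : seg lt a) : Prop := ole lt (proj1_sig x) (proj1_sig y).

Definition is_infinite_cardinal (T : Type) (lt : T -> T -> Prop) : Prop :=
  is_well_order lt /\
  (exists f : nat -> T, forall m n, f m = f n -> m = n) /\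
  (forall a : T, ~ exists g : T -> seg lt a, forall x y, g x = g y -> x = y).

Definition has_seq_colimits_below (T : Type) (lt : T -> T -> Prop)
  (C : Category) : Prop :=
  forall (a : T) (D : PFunctor (@seg_le T lt a) C),
    exists (v : C) (iota : forall x, Hom (D x) v), is_colimit D v iota.

Definition is_limit_ordinal (T : Type) (lt : T -> T -> Prop) (a : T) : Prop :=
  (exists x, lt x a) /\ (forall x, lt x a -> exists y, lt x y /\ lt y a).

Definition restrict (T : Type) (lt : T -> T -> Prop) (C : Category)
  (F : PFunctor (ole lt) C) (a : T) : PFunctor (@seg_le T lt a) C.
Proof.
  refine {| fobj := fun x : seg lt a => F (proj1_sig x);
            fmor := fun x y (p : seg_le x y) => fmor F p |}.
  - intros x p. apply fmor_id.
  - intros x y z p q r. apply fmor_comp.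
Defined.

Definition seq_colimit_preserving (T : Type) (lt : T -> T -> Prop)
  (C : Category) (F : PFunctor (ole lt) C) : Prop :=
  forall a : T, is_limit_ordinal lt a ->
    is_colimit (restrict F a) (F a)
      (fun x : seg lt a => fmor F (or_introl (proj2_sig x) : ole lt (proj1_sig x) a)).

(** A set X of morphisms with domain a (a predicate on the morphisms out of a)
    is generic above a. *)
Definition generic_above (C : Category) (a : C)
  (X : forall b : C, Hom a b -> Prop) : Prop :=
  forall (b : C) (f : Hom a b), exists (c : C) (g : Hom b c), X c (comp g f).

(* Main.v *)
Require Import Defs.
From Stdlib Require Import Classical ClassicalEpsilon FunctionalExtensionality ProofIrrelevance Eqdep List Arith Lia Inverse_Image FinFun.

Notation em := excluded_middle_informative.
Notation cid := (@constructive_indefinite_description _ _).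

Lemma php (A : Type) (l : list A) (f : nat -> A) :
  (forall i j, f i = f j -> i = j) -> (forall i, In (f i) l) -> False.
Proof.
  intros Hi Hin.
  assert (ND : NoDup (map f (seq 0 (S (length l))))).
  { apply Injective_map_NoDup; [intros i j; apply Hi | apply seq_NoDup]. }
  assert (Inc : incl (map f (seq 0 (S (length l)))) l).
  { intros y Hy. apply in_map_iff in Hy. destruct Hy as [i [<- _]]. apply Hin. }
  pose proof (NoDup_incl_length ND Inc) as Hl.
  rewrite length_map, length_seq in Hl. lia.
Qed.

Definition lexrel {A B} (R1 : A -> A -> Prop) (R2 : B -> B -> Prop) (p q : A * B) : Prop :=
  R1 (fst p) (fst q) \/ (fst p = fst q /\ R2 (snd p) (snd q)).
Lemma wf_lex {A B} R1 R2 : well_founded R1 -> well_founded R2 -> well_founded (@lexrel A B R1 R2).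
Proof.
  intros W1 W2 [a b]. revert b. induction a as [a IHa] using (well_founded_ind W1).
  intro b. induction b as [b IHb] using (well_founded_ind W2).
  constructor. intros [a' b'] [H|[E H]]; simpl in *.
  - apply IHa; auto.
  - subst a'. apply IHb; auto.
Qed.

Section Card.
Variable T : Type.
Variable lt : T -> T -> Prop.
Hypothesis Hwf : well_founded lt.
Hypothesis Htr : forall x y z, lt x y -> lt y z -> lt x z.
Hypothesis Htri : forall x y, lt x y \/ x = y \/ lt y x.
Hypothesis Hirr : forall x, ~ lt x x.

Definition below a := fun x => lt x a.
Definition inj_into (A B : T -> Prop) (f : T -> T) :=
  (forall x, A x -> B (f x)) /\ (forall x y, A x -> A y -> f x = f y -> x = y).
Definition inj2_into (A B : T -> Prop) (p : T -> T -> T) :=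
  (forall x y, A x -> A y -> B (p x y)) /\
  (forall x y x' y', A x -> A y -> A x' -> A y' -> p x y = p x' y' -> x = x' /\ y = y').
Definition infinite (A : T -> Prop) :=
  exists c : nat -> T, (forall n, A (c n)) /\ (forall m n, c m = c n -> m = n).

Lemma ole_trans x y z : ole lt x y -> ole lt y z -> ole lt x z.
Proof. unfold ole. intros [H|H] [H'|H']; subst; eauto. Qed.

Lemma least_ex (P : T -> Prop) : (exists x, P x) -> exists x, P x /\ forall y, P y -> ~ lt y x.
Proof.
  intros [x Px]. revert Px. induction x as [x IH] using (well_founded_ind Hwf). intro Px.
  destruct (classic (exists y, P y /\ lt y x)) as [[y [Py Hy]]|N].
  - exact (IH y Hy Py).
  - exists x. split; auto. intros y Py Hy. apply N. eauto.
Qed.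
Definition least_of (P : T -> Prop) (H : exists x, P x) : T := proj1_sig (cid (least_ex P H)).
Lemma least_of_spec P H : P (least_of P H) /\ forall y, P y -> ~ lt y (least_of P H).
Proof. unfold least_of. destruct (cid _) as [x Hx]. exact Hx. Qed.

Definition hj (c : nat -> T) (g x : T) : T :=
  match em (x = g) with left _ => c 0 | right _ =>
    match em (exists n, x = c n) with left H => c (S (proj1_sig (cid H))) | right _ => x end end.
Lemma hj_g c g : hj c g g = c 0.
Proof. unfold hj. destruct (em (g = g)); congruence. Qed.
Lemma hj_c c g x n : (forall m n, c m = c n -> m = n) -> x <> g -> x = c n -> hj c g x = c (S n).
Proof.
  intros Ci Hx Hn. unfold hj. destruct (em (x = g)); [congruence|].
  destruct (em _) as [H|H]; [|exfalso; eauto].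
  destruct (cid H) as [m Hm]; simpl. rewrite (Ci m n); congruence.
Qed.
Lemma hj_o c g x : x <> g -> (forall n, x <> c n) -> hj c g x = x.
Proof.
  intros Hx Hn. unfold hj. destruct (em (x = g)); [congruence|].
  destruct (em _) as [[m Hm]|H]; [exfalso; eapply Hn; eauto|auto].
Qed.

Lemma hotel g : infinite (below g) -> exists j, inj_into (fun x => ole lt x g) (below g) j.
Proof.
  intros [c [Hc Ci]]. exists (hj c g).
  assert (cg : forall n, c n <> g) by (intros n E; apply (Hirr g); rewrite <- E at 1; apply Hc).
  assert (spec : forall x, (x = g /\ hj c g x = c 0) \/
                 (exists n, x = c n /\ hj c g x = c (S n)) \/
                 (x <> g /\ (forall n, x <> c n) /\ hj c g x = x)).
  { intro x. destruct (classic (x = g)) as [E|E].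
    - left. subst. split; auto. apply hj_g.
    - destruct (classic (exists n, x = c n)) as [[n Hn]|N].
      + right; left. exists n. split; auto. apply hj_c; auto.
      + right; right. split; [auto|]. assert (N' : forall n, x <> c n) by eauto.
        split; auto. apply hj_o; auto. }
  split.
  - intros x Hx. destruct (spec x) as [[_ ->]|[[n [_ ->]]|[A [B ->]]]]; try apply Hc.
    destruct Hx; [auto|contradiction].
  - intros x y Hx Hy Exy.
    destruct (spec x) as [[X1 X2]|[[n [X1 X2]]|[X1 [X2 X3]]]];
    destruct (spec y) as [[Y1 Y2]|[[m [Y1 Y2]]|[Y1 [Y2 Y3]]]];
    rewrite ?X2, ?X3, ?Y2, ?Y3 in Exy; subst; auto.
    + apply Ci in Exy. discriminate.
    + exfalso. eapply Y2; eauto.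
    + apply Ci in Exy. discriminate.
    + apply Ci in Exy. injection Exy as ->. auto.
    + exfalso. eapply Y2; eauto.
    + exfalso. eapply X2; eauto.
    + exfalso. eapply X2; eauto.
Qed.

Fixpoint eseq (z0 : T) (n : nat) : T :=
  match n with
  | 0 => least_of (fun _ => True) (ex_intro _ z0 I)
  | S n => let x := eseq z0 n in
      match em (exists y, lt x y) with left H => least_of (fun y => lt x y) H | right _ => x end
  end.

Lemma eseq_cover z0 n x : ole lt x (eseq z0 n) -> exists j, j <= n /\ x = eseq z0 j.
Proof.
  revert x. induction n as [|n IHn]; intros x Hx.
  - exists 0. split; auto. destruct Hx as [Hx|Hx]; auto. exfalso. simpl in Hx.
    destruct (least_of_spec (fun _ => True) (ex_intro _ z0 I)) as [_ L]. exact (L x I Hx).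
  - simpl in Hx. destruct (em _) as [H|H].
    + destruct (least_of_spec _ H) as [L1 L2].
      destruct (Htri x (eseq z0 n)) as [A|[A|A]].
      * destruct (IHn x (or_introl A)) as [j [Hj Ej]]. exists j; split; auto.
      * destruct (IHn x (or_intror A)) as [j [Hj Ej]]. exists j; split; auto.
      * destruct Hx as [Hx|Hx]; [exfalso; exact (L2 x A Hx)|].
        exists (S n). split; auto. simpl. destruct (em _) as [H'|H']; [|contradiction].
        rewrite Hx. f_equal. apply proof_irrelevance.
    + destruct (IHn x Hx) as [j [Hj Ej]]. exists j; split; auto.
Qed.

Lemma eseq_below z0 g : (forall n, eseq z0 n <> g) -> forall n, lt (eseq z0 n) g /\ lt (eseq z0 n) (eseq z0 (S n)).
Proof.
  intros Ne. assert (B : forall n, lt (eseq z0 n) g).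
  { induction n as [|n IHn].
    - destruct (Htri (eseq z0 0) g) as [A|[A|A]]; auto.
      + exfalso; apply (Ne 0 A).
      + exfalso. simpl in A. destruct (least_of_spec (fun _ => True) (ex_intro _ z0 I)) as [_ L]. exact (L g I A).
    - destruct (Htri (eseq z0 (S n)) g) as [A|[A|A]]; auto.
      + exfalso; apply (Ne _ A).
      + exfalso. simpl in A. destruct (em _) as [H|H]; [|exfalso; eauto].
        destruct (least_of_spec _ H) as [L1 L2]. exact (L2 g IHn A). }
  intro n. split; auto. simpl. destruct (em _) as [H|H]; [|exfalso; eauto].
  apply (least_of_spec _ H).
Qed.

Lemma eseq_hits g : ~ infinite (below g) -> exists n, eseq g n = g.
Proof.
  intros NI. apply NNPP. intro N. apply NI.
  assert (Ne : forall n, eseq g n <> g) by (intros n E; apply N; eauto).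
  pose proof (eseq_below g g Ne) as B.
  exists (eseq g). split; [intro n; apply B|].
  assert (Mono : forall m k, lt (eseq g m) (eseq g (S (m + k)))).
  { intros m k. induction k as [|k IHk].
    - rewrite Nat.add_0_r. apply B.
    - eapply Htr; [exact IHk|]. rewrite <- Nat.add_succ_r. apply B. }
  intros m n E. destruct (Nat.lt_trichotomy m n) as [A|[A|A]]; auto; exfalso.
  - pose proof (Mono m (n - S m)) as M. replace (S (m + (n - S m))) with n in M by lia.
    rewrite E in M. exact (Hirr _ M).
  - pose proof (Mono n (m - S n)) as M. replace (S (n + (m - S n))) with m in M by lia.
    rewrite E in M. exact (Hirr _ M).
Qed.

Definition mx (u v : T) : T := if em (lt u v) then v else u.
Lemma mx_l u v : ole lt u (mx u v).
Proof. unfold mx, ole. destruct (em _); auto. Qed.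
Lemma mx_r u v : ole lt v (mx u v).
Proof. unfold mx, ole. destruct (em _); auto. destruct (Htri u v) as [A|[A|A]]; auto. contradiction. Qed.
Lemma mx_in u v : mx u v = u \/ mx u v = v.
Proof. unfold mx. destruct (em _); auto. Qed.
Definition key (w : T * T) : T * (T * T) := (mx (fst w) (snd w), w).
Definition godel (w' w : T * T) : Prop := lexrel lt (lexrel lt lt) (key w') (key w).
Lemma wf_godel : well_founded godel.
Proof. apply (wf_inverse_image _ _ _ key). apply wf_lex; [exact Hwf | apply wf_lex; exact Hwf]. Qed.
Lemma godel_total w w' : w = w' \/ godel w w' \/ godel w' w.
Proof.
  destruct w as [a b], w' as [a' b']. unfold godel, lexrel, key; simpl.
  destruct (Htri (mx a b) (mx a' b')) as [H|[H|H]]; auto.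
  destruct (Htri a a') as [H1|[H1|H1]]; auto.
  - right; left. right. auto.
  - subst a'. destruct (Htri b b') as [H2|[H2|H2]].
    + right; left. right. split; auto.
    + subst; auto.
    + right; right. right. split; auto.
  - right; right. right. auto.
Qed.
Lemma godel_le w' w : godel w' w -> ole lt (mx (fst w') (snd w')) (mx (fst w) (snd w)).
Proof. unfold godel, lexrel, key; simpl. intros [H|[H _]]; [left|right]; auto. Qed.

Section Core.
Variable SS : T -> Prop.
Hypothesis Sdown : forall x y, lt x y -> SS y -> SS x.
Hypothesis Sinf : infinite SS.
Hypothesis Scard : forall a, SS a -> ~ exists f, inj_into SS (below a) f.
Hypothesis IH : forall g, SS g -> infinite (below g) -> exists p, inj2_into (below g) (below g) p.

Lemma small w : SS (fst w) -> SS (snd w) ->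
  ~ exists H : T -> T * T, (forall s, SS s -> godel (H s) w) /\
                          (forall s s', SS s -> SS s' -> H s = H s' -> s = s').
Proof.
  intros Sx Sy [H [HH Hinj]].
  set (g := mx (fst w) (snd w)).
  assert (Sg : SS g) by (destruct (mx_in (fst w) (snd w)) as [E|E]; unfold g; rewrite E; auto).
  assert (Comp : forall s, SS s -> ole lt (fst (H s)) g /\ ole lt (snd (H s)) g).
  { intros s Ss. pose proof (godel_le _ _ (HH s Ss)) as G. split; eapply ole_trans; eauto; [apply mx_l|apply mx_r]. }
  destruct (classic (infinite (below g))) as [Inf|Fin].
  - destruct (IH g Sg Inf) as [p [Pm Pi]]. destruct (hotel g Inf) as [j [Jm Ji]].
    apply (Scard g Sg). exists (fun s => p (j (fst (H s))) (j (snd (H s)))). split.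
    + intros s Ss. destruct (Comp s Ss). apply Pm; apply Jm; auto.
    + intros s s' Ss Ss' E. destruct (Comp s Ss), (Comp s' Ss').
      apply Pi in E; try (apply Jm; assumption). destruct E as [E1 E2].
      apply Ji in E1; auto. apply Ji in E2; auto. apply Hinj; auto.
      destruct (H s), (H s'); simpl in *; congruence.
  - destruct (eseq_hits g Fin) as [n En].
    set (idx := fun x => match em (exists j, j <= n /\ x = eseq g j) with
                         | left h => proj1_sig (cid h) | right _ => 0 end).
    assert (Idx : forall x, ole lt x g -> idx x <= n /\ x = eseq g (idx x)).
    { intros x Hx. rewrite <- En in Hx. destruct (eseq_cover g n x Hx) as [j Hj].
      unfold idx. destruct (em _) as [h|h]; [|exfalso; eauto]. destruct (cid h) as [k Hk]; simpl. exact Hk. }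
    destruct Sinf as [c [Hc Ci]].
    apply (php _ (list_prod (seq 0 (S n)) (seq 0 (S n)))
                 (fun k => (idx (fst (H (c k))), idx (snd (H (c k)))))).
    + intros i k E. injection E as E1 E2. apply Ci.
      destruct (Comp (c i) (Hc i)) as [A1 A2], (Comp (c k) (Hc k)) as [B1 B2].
      apply Hinj; auto.
      destruct (Idx _ A1) as [_ X1], (Idx _ A2) as [_ X2], (Idx _ B1) as [_ Y1], (Idx _ B2) as [_ Y2].
      destruct (H (c i)) as [u v], (H (c k)) as [u' v']; simpl in *.
      rewrite X1, X2, Y1, Y2, E1, E2. reflexivity.
    + intro i. apply in_prod_iff. destruct (Comp (c i) (Hc i)) as [A1 A2].
      destruct (Idx _ A1) as [I1 _], (Idx _ A2) as [I2 _]. split; apply in_seq; lia.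
Qed.

Definition Psi (w : T * T) (rec : forall w', godel w' w -> T) : T :=
  match em (exists s, SS s /\ forall w' (h : godel w' w), SS (fst w') -> SS (snd w') -> rec w' h <> s) with
  | left H => proj1_sig (cid H)
  | right _ => fst w
  end.
Definition gf := Fix wf_godel (fun _ => T) Psi.
Lemma gf_eq w : gf w = Psi w (fun w' _ => gf w').
Proof.
  unfold gf. apply (Fix_eq wf_godel (fun _ => T) Psi). intros x f1 f2 E.
  assert (f1 = f2) by (extensionality y; extensionality h; auto). subst; reflexivity.
Qed.
Lemma gf_spec w : SS (fst w) -> SS (snd w) ->
  SS (gf w) /\ forall w', godel w' w -> SS (fst w') -> SS (snd w') -> gf w' <> gf w.
Proof.
  intros Sx Sy. rewrite gf_eq. unfold Psi. destruct (em _) as [H|nH].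
  - destruct (cid H) as [s [Ss Hs]]; simpl. split; auto.
  - exfalso. apply (small w Sx Sy).
    set (Hf := fun s => match em (exists w', godel w' w /\ SS (fst w') /\ SS (snd w') /\ gf w' = s) with
                        | left h => proj1_sig (cid h) | right _ => (s, s) end).
    assert (HS : forall s, SS s -> godel (Hf s) w /\ gf (Hf s) = s).
    { intros s Ss. unfold Hf. destruct (em _) as [h|h].
      - destruct (cid h) as [w' [A [B [C D]]]]; simpl. auto.
      - exfalso. apply nH. exists s. split; auto. intros w' hw A B E. apply h. exists w'. auto. }
    exists Hf. split.
    + intros s Ss. apply HS; auto.
    + intros s s' Ss Ss' E. rewrite <- (proj2 (HS s Ss)), <- (proj2 (HS s' Ss')), E. reflexivity.
Qed.

Lemma core : exists p, inj2_into SS SS p.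
Proof.
  exists (fun x y => gf (x, y)). split.
  - intros x y Sx Sy. apply (gf_spec (x, y)); auto.
  - intros x y x' y' Sx Sy Sx' Sy' E.
    destruct (godel_total (x, y) (x', y')) as [A|[A|A]].
    + injection A; auto.
    + exfalso. apply (proj2 (gf_spec (x', y') Sx' Sy') (x, y) A Sx Sy E).
    + exfalso. apply (proj2 (gf_spec (x, y) Sx Sy) (x', y') A Sx' Sy'). auto.
Qed.
End Core.

Lemma hess_below a : infinite (below a) -> exists p, inj2_into (below a) (below a) p.
Proof.
  induction a as [a IHa] using (well_founded_ind Hwf). intros Inf.
  destruct (classic (exists b, lt b a /\ exists f, inj_into (below a) (below b) f)) as [[b [Hb [f [Fm Fi]]]]|N].
  - destruct Inf as [c [Hc Ci]].
    assert (Infb : infinite (below b)).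
    { exists (fun n => f (c n)). split; [intro n; apply Fm, Hc|]. intros m n E. apply Ci, Fi; auto. }
    destruct (IHa b Hb Infb) as [p [Pm Pi]].
    exists (fun x y => p (f x) (f y)). split.
    + intros x y Hx Hy. unfold below. eapply Htr; [apply Pm; apply Fm; auto|exact Hb].
    + intros x y x' y' Hx Hy Hx' Hy' E. apply Pi in E; try (apply Fm; auto).
      destruct E; split; apply Fi; auto.
  - apply core.
    + exact Inf.
    + intros b Hb Hf. apply N. eauto.
    + intros g Hg Infg. apply IHa; auto.
Qed.

Lemma hess_top : infinite (fun _ => True) ->
  (forall a, ~ exists f, inj_into (fun _ => True) (below a) f) ->
  exists p : T -> T -> T, forall x y x' y', p x y = p x' y' -> x = x' /\ y = y'.
Proof.
  intros Inf Card. destruct (core (fun _ => True)) as [p [_ Pi]]; auto.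
  - intros g _ Infg. apply hess_below; auto.
  - exists p. intros; apply Pi; auto.
Qed.
End Card.

Set Implicit Arguments.

Section Arrows.
Variable C : Category.
Definition Arr := {a : C & {b : C & Hom a b}}.
Definition arr {a b : C} (f : Hom a b) : Arr := existT _ a (existT _ b f).
Definition src (w : Arr) : C := projT1 w.
Definition tgt (w : Arr) : C := projT1 (projT2 w).
Definition pay (w : Arr) : Hom (src w) (tgt w) := projT2 (projT2 w).
Definition arr_comp (g f : Arr) : Arr :=
  match em (tgt f = src g) with
  | left e => arr (comp (pay g) (eq_rect _ (fun b => Hom (src f) b) (pay f) _ e))
  | right _ => f end.
Lemma arr_comp_arr a b c (f : Hom a b) (g : Hom b c) : arr_comp (arr g) (arr f) = arr (comp g f).
Proof.
  unfold arr_comp. destruct (em _) as [e|n]; [|exfalso; apply n; reflexivity].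
  change (b = b) in e. rewrite (UIP_refl _ _ e). reflexivity.
Qed.
Lemma arr_inj a b (f g : Hom a b) : arr f = arr g -> f = g.
Proof. unfold arr. intro H. apply inj_pairT2 in H. apply inj_pairT2 in H. exact H. Qed.
Lemma arr_eta w : w = arr (pay w).
Proof. destruct w as [a [b f]]; reflexivity. Qed.

Lemma arr_cases (P : Arr -> Prop) : (forall a b (f : Hom a b), P (arr f)) -> forall w, P w.
Proof. intros H [a [b f]]. apply (H a b f). Qed.

Lemma comp_gen f g : tgt f = src g -> src (arr_comp g f) = src f /\ tgt (arr_comp g f) = tgt g.
Proof.
  revert f. refine (arr_cases _ _). intros a b f. revert g. refine (arr_cases _ _). intros b' c g.
  simpl. intro e. unfold tgt, src in e. simpl in e. subst b'. rewrite arr_comp_arr. split; reflexivity.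
Qed.
Lemma comp_assoc_arr f g h : tgt f = src g -> tgt g = src h ->
  arr_comp h (arr_comp g f) = arr_comp (arr_comp h g) f.
Proof.
  revert f. refine (arr_cases _ _). intros a b f. revert g. refine (arr_cases _ _). intros b' c g.
  revert h. refine (arr_cases _ _). intros c' d h.
  intros e1 e2. unfold tgt, src in e1, e2. simpl in e1, e2. subst b' c'.
  rewrite !arr_comp_arr, comp_assoc. reflexivity.
Qed.
Lemma comp_idl f b : tgt f = b -> arr_comp (arr (idm b)) f = f.
Proof.
  revert f. refine (arr_cases _ _). intros a b' f e. unfold tgt in e. simpl in e. subst b'.
  rewrite arr_comp_arr, comp_id_l. reflexivity.
Qed.

Definition extract (w : Arr) (a b : C) (e1 : src w = a) (e2 : tgt w = b) : Hom a b :=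
  eq_rect _ (fun b => Hom a b) (eq_rect _ (fun a => Hom a (tgt w)) (pay w) _ e1) _ e2.
Lemma arr_extract w a b (e1 : src w = a) (e2 : tgt w = b) : arr (extract w e1 e2) = w.
Proof. destruct w as [a0 [b0 f]]; unfold src, tgt in *; simpl in *. subst. reflexivity. Qed.

Definition build (P : Type) (le : P -> P -> Prop) (ob : P -> C) (ar : P -> P -> Arr)
  (Hs : forall x y, le x y -> src (ar x y) = ob x) (Ht : forall x y, le x y -> tgt (ar x y) = ob y)
  (Hid : forall x, le x x -> ar x x = arr (idm (ob x)))
  (Hc : forall x y z, le x y -> le y z -> ar x z = arr_comp (ar y z) (ar x y)) : PFunctor le C.
Proof.
  refine {| fobj := ob; fmor := fun x y p => extract (ar x y) (Hs x y p) (Ht x y p) |}.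
  - intros x p. apply arr_inj. rewrite arr_extract. apply Hid; auto.
  - intros x y z p q r. apply arr_inj. rewrite <- arr_comp_arr, !arr_extract. apply Hc; auto.
Defined.
Lemma build_fmor P le ob ar Hs Ht Hid Hc x y (p : le x y) :
  arr (fmor (@build P le ob ar Hs Ht Hid Hc) p) = ar x y.
Proof. simpl. apply arr_extract. Qed.

Lemma colim_transfer (P : Type) (le : P -> P -> Prop) (o : P -> C)
  (m1 m2 : forall x y, le x y -> Hom (o x) (o y)) i1 c1 i2 c2 v v'
  (iota : forall x, Hom (o x) v) (iota' : forall x, Hom (o x) v') :
  (forall x y p, m1 x y p = m2 x y p) -> v = v' -> (forall x, arr (iota x) = arr (iota' x)) ->
  is_colimit (Build_PFunctor le C o m1 i1 c1) v iota -> is_colimit (Build_PFunctor le C o m2 i2 c2) v' iota'.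
Proof.
  intros Em Ev Ei H.
  assert (m1 = m2) by (extensionality x; extensionality y; extensionality p; auto). subst m2.
  assert (i1 = i2) by apply proof_irrelevance. assert (c1 = c2) by apply proof_irrelevance. subst.
  assert (iota = iota') by (extensionality x; apply arr_inj; auto). subst. exact H.
Qed.

Lemma X_arr a (X : forall d : C, Hom a d -> Prop) d d' (h : Hom a d) (h' : Hom a d') :
  arr h = arr h' -> X d' h' -> X d h.
Proof.
  unfold arr. intros E. apply inj_pairT2 in E.
  assert (G : forall s s' : sigT (fun d => Hom a d), s = s' -> X (projT1 s') (projT2 s') -> X (projT1 s) (projT2 s))
    by (intros s s' ->; auto).
  exact (G _ _ E).
Qed.
End Arrows.
Arguments arr {C a b}.
Arguments src {C}. Arguments tgt {C}. Arguments pay {C}. Arguments arr_comp {C}.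
Arguments extract {C} w {a b}.
Arguments build {C P}.
Arguments arr_comp_arr {C a b c}.

Unset Implicit Arguments.

Section Main.
Variable T : Type.
Variable lt : T -> T -> Prop.
Hypothesis Hwf : well_founded lt.
Hypothesis Htr : forall x y z, lt x y -> lt y z -> lt x z.
Hypothesis Htri : forall x y, lt x y \/ x = y \/ lt y x.
Hypothesis Hirr : forall x, ~ lt x x.
Variable pr : T -> T -> T.
Hypothesis Hpr : forall x y x' y', pr x y = pr x' y' -> x = x' /\ y = y'.
Hypothesis Hseg : forall a, ~ exists f, inj_into T (fun _ => True) (below T lt a) f.
Variables u1 u2 : T.
Hypothesis Hu : u1 <> u2.

Lemma not_lt_ole x y : ~ lt x y -> ole lt y x.
Proof. intro H. unfold ole. destruct (Htri x y) as [A|[A|A]]; auto. contradiction. Qed.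

Lemma nomax b : exists b', lt b b'.
Proof.
  apply NNPP. intro N.
  assert (All : forall x, ole lt x b) by (intro x; apply not_lt_ole; intro H; apply N; eauto).
  destruct (classic (exists x, pr u1 x = b)) as [[x1 E1]|N1].
  - apply (Hseg b). exists (pr u2). split.
    + intros x _. destruct (All (pr u2 x)) as [H|H]; auto. exfalso.
      apply Hu. apply (Hpr u1 x1 u2 x). congruence.
    + intros x y _ _ E. apply (Hpr _ _ _ _ E).
  - apply (Hseg b). exists (pr u1). split.
    + intros x _. destruct (All (pr u1 x)) as [H|H]; auto. exfalso. apply N1; eauto.
    + intros x y _ _ E. apply (Hpr _ _ _ _ E).
Qed.

Definition taskf (b : T) : T * T :=
  match em (exists a t k, pr (pr a t) k = b) with
  | left H => (proj1_sig (cid H), proj1_sig (cid (proj2_sig (cid H))))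
  | right _ => (b, b) end.

Lemma task_spec a t : exists b, ole lt a b /\ taskf b = (a, t).
Proof.
  assert (K : exists k, ole lt a (pr (pr a t) k)).
  { apply NNPP. intro N. apply (Hseg a). exists (pr (pr a t)). split.
    - intros k _. destruct (Htri (pr (pr a t) k) a) as [A|[A|A]]; auto; exfalso; apply N; exists k.
      + right; auto.
      + left; auto.
    - intros x y _ _ E. apply (Hpr _ _ _ _ E). }
  destruct K as [k Hk]. exists (pr (pr a t) k). split; auto.
  unfold taskf. destruct (em _) as [H|H]; [|exfalso; apply H; eauto].
  destruct (cid H) as [a' H1]; simpl. destruct (cid H1) as [t' H2]; simpl.
  destruct H2 as [k' E]. apply Hpr in E. destruct E as [E _]. apply Hpr in E. destruct E; subst; auto.
Qed.

Variable C : Category.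
Hypothesis Hcolim : has_seq_colimits_below lt C.
Variable Q : forall a : C, (forall b : C, Hom a b -> Prop) -> Prop.
Hypothesis HQcard : forall a : C, exists e : T -> (forall b : C, Hom a b -> Prop),
                forall X, Q a X -> exists t, e t = X.
Hypothesis HQgen : forall (a : C) X, Q a X -> @generic_above C a X.
Variable c0 : C.

Definition enum (a : C) : T -> (forall b : C, Hom a b -> Prop) := proj1_sig (cid (HQcard a)).
Lemma enum_spec a X : Q a X -> exists t, enum a t = X.
Proof. unfold enum. destruct (cid _) as [e He]. apply He. Qed.

Definition stepc (w : Arr C) (t : T) : {c' : C & Hom (tgt w) c'} :=
  match em (Q (src w) (enum (src w) t)) with
  | left H => let c1 := cid (HQgen _ _ H (tgt w) (pay w)) in
              existT _ (proj1_sig c1) (proj1_sig (cid (proj2_sig c1)))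
  | right _ => existT _ (tgt w) (idm (tgt w)) end.
Lemma stepc_spec a b (f : Hom a b) t : Q a (enum a t) ->
  enum a t (projT1 (stepc (arr f) t)) (comp (projT2 (stepc (arr f) t)) f).
Proof.
  intro HQ. unfold stepc. destruct (em _) as [H|H]; [|contradiction]. simpl.
  destruct (cid _) as [c1 H1]; simpl. destruct (cid H1) as [g Hg]. simpl. exact Hg.
Qed.

Definition colimc (a : T) (D : PFunctor (@seg_le T lt a) C) : {v : C & forall x, Hom (D x) v} :=
  existT _ (proj1_sig (cid (Hcolim a D))) (proj1_sig (cid (proj2_sig (cid (Hcolim a D))))).
Lemma colimc_spec a D : is_colimit D (projT1 (colimc a D)) (projT2 (colimc a D)).
Proof. unfold colimc. destruct (cid (Hcolim a D)) as [v H]. simpl. destruct (cid H) as [i Hi]. exact Hi. Qed.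

Definition Val := (C * (T -> Arr C))%type.

Definition succ_val (al be : T) (Rb : Val) : Val :=
  let s := stepc (if em (ole lt (fst (taskf be)) be) then snd Rb (fst (taskf be)) else snd Rb be)
                 (snd (taskf be)) in
  (projT1 s, fun x => if em (x = al) then arr (idm (projT1 s)) else arr_comp (arr (projT2 s)) (snd Rb x)).

Definition obsf al (rec : forall y, lt y al -> Val) (s : seg lt al) : C :=
  fst (rec (proj1_sig s) (proj2_sig s)).
Definition arsf al (rec : forall y, lt y al -> Val) (s s' : seg lt al) : Arr C :=
  snd (rec (proj1_sig s') (proj2_sig s')) (proj1_sig s).
Definition LimGood al (rec : forall y, lt y al -> Val) : Prop :=
  (forall s s', seg_le s s' -> src (arsf al rec s s') = obsf al rec s) /\
  (forall s s', seg_le s s' -> tgt (arsf al rec s s') = obsf al rec s') /\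
  (forall s, seg_le s s -> arsf al rec s s = arr (idm (obsf al rec s))) /\
  (forall s s' s'', seg_le s s' -> seg_le s' s'' ->
     arsf al rec s s'' = arr_comp (arsf al rec s' s'') (arsf al rec s s')).

Definition limD al rec (G : LimGood al rec) : PFunctor (@seg_le T lt al) C :=
  build (@seg_le T lt al) (obsf al rec) (arsf al rec)
    (proj1 G) (proj1 (proj2 G)) (proj1 (proj2 (proj2 G))) (proj2 (proj2 (proj2 G))).

Definition lim_val al (rec : forall y, lt y al -> Val) : Val :=
  match em (LimGood al rec) with
  | left G => let cv := colimc al (limD al rec G) in
      (projT1 cv, fun x => match em (lt x al) with
                           | left hx => arr (projT2 cv (exist _ x hx))
                           | right _ => arr (idm (projT1 cv)) end)
  | right _ => (c0, fun _ => arr (idm c0)) end.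

Definition Phi al (rec : forall y, lt y al -> Val) : Val :=
  match em (exists be, lt be al /\ forall z, lt z al -> ole lt z be) with
  | left H => succ_val al (proj1_sig (cid H)) (rec _ (proj1 (proj2_sig (cid H))))
  | right _ => if em (exists z, lt z al) then lim_val al rec else (c0, fun _ => arr (idm c0))
  end.

Definition R := Fix Hwf (fun _ => Val) Phi.
Lemma R_eq al : R al = Phi al (fun y _ => R y).
Proof.
  unfold R. apply (Fix_eq Hwf (fun _ => Val) Phi). intros x f1 f2 E.
  assert (f1 = f2) by (extensionality y; extensionality h; auto). subst; reflexivity.
Qed.

Lemma R_succ al be : lt be al -> (forall z, lt z al -> ole lt z be) -> R al = succ_val al be (R be).
Proof.
  intros H1 H2. rewrite R_eq. unfold Phi. destruct (em _) as [H|H]; [|exfalso; apply H; eauto].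
  destruct (cid H) as [be' HB]. simpl. pose proof HB as [B1 B2].
  assert (be' = be).
  { destruct (B2 be H1) as [A|A]; auto. destruct (H2 be' B1) as [A'|A']; auto.
    exfalso. apply (Hirr be). eauto. }
  subst; reflexivity.
Qed.
Lemma R_min al : (forall z, ~ lt z al) -> R al = (c0, fun _ => arr (idm c0)).
Proof.
  intros H. rewrite R_eq. unfold Phi. destruct (em _) as [E|_].
  { exfalso. destruct E as [b [B _]]. eapply H; eauto. }
  destruct (em _) as [E|_]; [exfalso; destruct E as [z Z]; eapply H; eauto|]. reflexivity.
Qed.
Lemma R_lim al : (exists z, lt z al) -> (forall x, lt x al -> exists y, lt x y /\ lt y al) ->
  R al = lim_val al (fun y _ => R y).
Proof.
  intros H1 H2. rewrite R_eq. unfold Phi. destruct (em _) as [E|_].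
  - exfalso. destruct E as [b [B1 B2]]. destruct (H2 b B1) as [y [Y1 Y2]]. destruct (B2 y Y2) as [A|A]; [apply (Hirr b); eauto | subst; apply (Hirr b); auto].
  - destruct (em _); [reflexivity|contradiction].
Qed.

Definition ob x := fst (R x).
Definition m x y := snd (R y) x.
Definition LocalGood al : Prop :=
  (forall x, ole lt x al -> src (m x al) = ob x /\ tgt (m x al) = ob al) /\
  m al al = arr (idm (ob al)) /\
  (forall x y, ole lt x y -> ole lt y al -> m x al = arr_comp (m y al) (m x y)).


Lemma ole_lt_or_eq x y : ole lt x y -> x <> y -> lt x y.
Proof. intros [H|H] N; auto. contradiction. Qed.

Lemma succ_char al be : lt be al -> (forall z, lt z al -> ole lt z be) -> LocalGood be ->
  exists g : Arr C, src g = ob be /\ tgt g = ob al /\ m al al = arr (idm (ob al)) /\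
    forall x, x <> al -> m x al = arr_comp g (m x be).
Proof.
  intros H1 H2 [L1 [L2 L3]]. unfold m, ob in *. rewrite (R_succ al be H1 H2). unfold succ_val. simpl.
  exists (arr (projT2 (stepc (if em (ole lt (fst (taskf be)) be) then snd (R be) (fst (taskf be)) else snd (R be) be) (snd (taskf be))))). split; [|split; [|split]].
  - unfold src. simpl. destruct (em (ole lt (fst (taskf be)) be)) as [h|h].
    + apply (L1 _ h).
    + rewrite L2. reflexivity.
  - reflexivity.
  - destruct (em (al = al)); [reflexivity|congruence].
  - intros x Hx. destruct (em (x = al)); [congruence|reflexivity].
Qed.

Lemma succ_good al be : lt be al -> (forall z, lt z al -> ole lt z be) ->
  (forall y, lt y al -> LocalGood y) -> LocalGood al.
Proof.
  intros H1 H2 IH. pose proof (IH be H1) as Lb.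
  destruct (succ_char al be H1 H2 Lb) as [g [G1 [G2 [G3 G4]]]].
  destruct Lb as [L1 [L2 L3]].
  assert (P1 : forall x, ole lt x al -> src (m x al) = ob x /\ tgt (m x al) = ob al).
  { intros x Hx. destruct (classic (x = al)) as [E|E].
    - subst. rewrite G3. split; reflexivity.
    - rewrite (G4 x E). assert (Hxb : ole lt x be) by (apply H2, ole_lt_or_eq; auto).
      destruct (L1 x Hxb) as [A B]. destruct (comp_gen (m x be) g) as [C1 C2]; [congruence|].
      split; congruence. }
  split; [exact P1|split; [exact G3|]].
  intros x y Hxy Hy. destruct (classic (y = al)) as [E|E].
  - subst y. rewrite G3. symmetry. apply comp_idl. apply (P1 x). eapply ole_trans; eauto.
  - assert (Hyb : ole lt y be) by (apply H2, ole_lt_or_eq; auto).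
    assert (Hxb : ole lt x be) by (eapply ole_trans; eauto).
    assert (Ex : x <> al).
    { intro X. subst x. apply (Hirr al). apply ole_lt_or_eq in Hy; auto.
      destruct Hxy as [A|A]; [eauto|subst; auto]. }
    rewrite (G4 x Ex), (G4 y E), (L3 x y Hxy Hyb).
    assert (Ly : lt y al) by (apply ole_lt_or_eq; auto).
    destruct (IH y Ly) as [M1 _]. destruct (M1 x Hxy) as [_ T1].
    destruct (L1 y Hyb) as [S2 T2].
    apply comp_assoc_arr; congruence.
Qed.

Lemma limgood_of al : (forall y, lt y al -> LocalGood y) -> LimGood al (fun y _ => R y).
Proof.
  intros IH. unfold LimGood, obsf, arsf. split; [|split; [|split]].
  - intros [x hx] [y hy] p. apply (proj1 (IH y hy)); auto.
  - intros [x hx] [y hy] p. apply (proj1 (IH y hy)); auto.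
  - intros [x hx] p. apply (proj1 (proj2 (IH x hx))).
  - intros [x hx] [y hy] [z hz] p q. apply (proj2 (proj2 (IH z hz))); auto.
Qed.

Lemma lim_char al : (exists z, lt z al) -> (forall x, lt x al -> exists y, lt x y /\ lt y al) ->
  (forall y, lt y al -> LocalGood y) ->
  exists G : LimGood al (fun y _ => R y),
    ob al = projT1 (colimc al (limD al _ G)) /\
    (forall x (hx : lt x al), m x al = arr (projT2 (colimc al (limD al _ G)) (exist _ x hx))) /\
    m al al = arr (idm (ob al)).
Proof.
  intros H1 H2 IH. pose proof (limgood_of al IH) as LG. unfold m, ob.
  rewrite (R_lim al H1 H2). unfold lim_val. destruct (em _) as [G|nG]; [|contradiction].
  exists G. simpl. split; [reflexivity|split].
  - intros x hx. destruct (em (lt x al)) as [h|h]; [|contradiction].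
    rewrite (proof_irrelevance _ h hx). reflexivity.
  - destruct (em (lt al al)) as [h|h]; [exfalso; apply (Hirr al h)|reflexivity].
Qed.

Lemma lim_good al : (exists z, lt z al) -> (forall x, lt x al -> exists y, lt x y /\ lt y al) ->
  (forall y, lt y al -> LocalGood y) -> LocalGood al.
Proof.
  intros H1 H2 IH. destruct (lim_char al H1 H2 IH) as [G [E1 [E2 E3]]].
  set (D := limD al _ G) in *.
  assert (P1 : forall x, ole lt x al -> src (m x al) = ob x /\ tgt (m x al) = ob al).
  { intros x Hx. destruct (classic (x = al)) as [E|E].
    - subst. rewrite E3. split; reflexivity.
    - assert (hx : lt x al) by (apply ole_lt_or_eq; auto).
      rewrite (E2 x hx). split; [reflexivity|]. unfold tgt. simpl. symmetry; exact E1. }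
  split; [exact P1|split; [exact E3|]].
  intros x y Hxy Hy. destruct (classic (y = al)) as [E|E].
  - subst y. rewrite E3. symmetry. apply comp_idl. apply (P1 x). eapply ole_trans; eauto.
  - assert (hy : lt y al) by (apply ole_lt_or_eq; auto).
    assert (hx : lt x al) by (destruct Hxy as [A|A]; [eauto|subst; auto]).
    rewrite (E2 x hx), (E2 y hy).
    assert (p : @seg_le T lt al (exist _ x hx) (exist _ y hy)) by exact Hxy.
    assert (Em : m x y = arr (fmor D p)).
    { unfold D, limD. rewrite build_fmor. reflexivity. }
    rewrite Em, arr_comp_arr. f_equal. symmetry.
    apply (proj1 (colimc_spec al D)).
Qed.

Lemma min_good al : (forall z, ~ lt z al) -> LocalGood al.
Proof.
  intros H. assert (E : R al = (c0, fun _ => arr (idm c0))) by (apply R_min; auto).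
  assert (X : forall x, ole lt x al -> x = al) by (intros x [A|A]; [exfalso; eapply H; eauto|auto]).
  unfold LocalGood, m, ob. rewrite E. simpl. split; [|split].
  - intros x Hx. rewrite (X x Hx). rewrite E. split; reflexivity.
  - reflexivity.
  - intros x y Hxy Hy. rewrite (X y Hy) in *. rewrite (X x Hxy). rewrite E. simpl.
    rewrite comp_idl; reflexivity.
Qed.

Lemma all_good : forall al, LocalGood al.
Proof.
  intro al. induction al as [al IH] using (well_founded_ind Hwf).
  destruct (classic (exists be, lt be al /\ forall z, lt z al -> ole lt z be)) as [[be [B1 B2]]|NS].
  - eapply succ_good; eauto.
  - destruct (classic (exists z, lt z al)) as [Z|NZ].
    + apply lim_good; auto. intros x hx. apply NNPP. intro N. apply NS. exists x. split; auto.
      intros z hz. apply not_lt_ole. intro A. apply N. eauto.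
    + apply min_good. intros z hz. apply NZ; eauto.
Qed.

Definition Fm : PFunctor (ole lt) C :=
  build (ole lt) ob m
    (fun x y p => proj1 (proj1 (all_good y) x p))
    (fun x y p => proj2 (proj1 (all_good y) x p))
    (fun x _ => proj1 (proj2 (all_good x)))
    (fun x y z p q => proj2 (proj2 (all_good z)) x y p q).

Lemma F_fmor x y (p : ole lt x y) : arr (fmor Fm p) = m x y.
Proof. unfold Fm. apply build_fmor. Qed.

Lemma main_sec :
    seq_colimit_preserving Fm /\
    (forall z : T, (forall x, ole lt z x) -> Fm z = c0) /\
    (forall (a : T) X, Q (Fm a) X ->
       exists b : T, exists H : lt a b, X (Fm b) (fmor Fm (or_introl H : ole lt a b))).
Proof.
  split; [|split].
  - intros a [H1 H2]. destruct (lim_char a H1 H2 (fun y _ => all_good y)) as [G [E1 [E2 E3]]].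
    pose proof (colimc_spec a (limD a _ G)) as CS.
    unfold restrict, Fm, build, limD, build in *. simpl in *.
    eapply colim_transfer; [ | | | exact CS].
    + intros x y p. apply arr_inj. transitivity (m (proj1_sig x) (proj1_sig y)); [apply arr_extract | symmetry; apply arr_extract].
    + symmetry. exact E1.
    + intros [x hx]. transitivity (m x a); [symmetry; apply E2 | symmetry; apply arr_extract].
  - intros z Hz. simpl. unfold ob. rewrite R_min; [reflexivity|].
    intros x hx. destruct (Hz x) as [A|A]; [apply (Hirr z); eauto|subst; apply (Hirr x hx)].
  - intros a X HQ. destruct (enum_spec _ _ HQ) as [t Et]. destruct (task_spec a t) as [be [Hab Htask]].
    destruct (least_ex T lt Hwf (fun y => lt be y) (nomax be)) as [b [Hb Hbl]].
    assert (H2 : forall z, lt z b -> ole lt z be).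
    { intros z hz. apply not_lt_ole. intro A. apply (Hbl z A hz). }
    assert (hab : lt a b) by (destruct Hab as [A|A]; [eauto|subst; auto]).
    exists b, hab.
    set (phi := fmor Fm Hab).
    assert (Em : m a be = arr phi) by (symmetry; apply F_fmor).
    apply (X_arr X (h' := comp (projT2 (stepc (arr phi) t)) phi)).
    + rewrite F_fmor. unfold m. rewrite (R_succ b be Hb H2). unfold succ_val. simpl. rewrite Htask. simpl.
      destruct (em (ole lt a be)) as [h|h]; [|contradiction].
      destruct (em (a = b)) as [E|E]; [subst; exfalso; apply (Hirr b hab)|].
      unfold m in Em. rewrite Em. apply arr_comp_arr.
    + rewrite <- Et. apply stepc_spec. rewrite Et. exact HQ.
Qed.

End Main.

Theorem proposition3p3
  (T : Type) (lt : T -> T -> Prop) (Hcard : is_infinite_cardinal lt)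
  (C : Category) (Hcolim : has_seq_colimits_below lt C)
  (Q : forall a : C, (forall b : C, Hom a b -> Prop) -> Prop)
  (HQcard : forall a : C, exists e : T -> (forall b : C, Hom a b -> Prop),
                forall X, Q a X -> exists t, e t = X)
  (HQgen : forall (a : C) X, Q a X -> @generic_above C a X) :
  forall c : C, exists F : PFunctor (ole lt) C,
    seq_colimit_preserving F /\
    (forall z : T, (forall x, ole lt z x) -> F z = c) /\
    (forall (a : T) X, Q (F a) X ->
       exists b : T, exists H : lt a b, X (F b) (fmor F (or_introl H : ole lt a b))).
Proof.
  intro c. destruct Hcard as [[Hwf [Htr [Htri Hirr]]] [[f Hf] Hcs]].
  assert (Hseg : forall a, ~ exists g, inj_into T (fun _ => True) (below T lt a) g).
  { intros a [g [G1 G2]]. apply (Hcs a). exists (fun x => exist _ (g x) (G1 x I)).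
    intros x y E. apply G2; auto. apply (f_equal (@proj1_sig _ _) E). }
  destruct (hess_top T lt Hwf Htr Htri Hirr) as [pr Hpr]; auto.
  { exists f. split; auto. }
  assert (Hu : f 0 <> f 1) by (intro E; apply Hf in E; discriminate).
  eexists. eapply (main_sec T lt Hwf Htr Htri Hirr pr Hpr Hseg (f 0) (f 1) Hu C Hcolim Q HQcard HQgen c).
Qed.

Print Assumptions proposition3p3.
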